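(* Let $F$ be a distribution function on $\mathbb{R}$ with tail $\overline{F}=1-F$ and let $h(\cdot)$ be a positive function. Then: $F\in \mathrm{GMDA}(h)$ and $h(x)\to\infty$ as $x\to\infty$ if and only if $F\in \mathrm{GMDA}(h)\cap\mathcal{L}$. Moreover, either of these equivalent conditions implies that $h^{p}(\cdot)\in\mathcal{H}^{\ast}_F$ for every $p\in(0,1)$.
   Context: A distribution function $F$ with upper endpoint $x_F=\sup\{x:F(x)<1\}$ belongs to the Gumbel max-domain of attraction with scaling function $h>0$, written $F\in\mathrm{GMDA}(h)$, if $\lim_{x\to x_F}\overline{F}(x+yh(x))/\overline{F}(x)=e^{-y}$ for all $y\in\mathbb{R}$. $F$ is long-tailed, $F\in\mathcal{L}$, if $\overline{F}(x)>0$ for all $x\ge 0$ and $\overline{F}(x+y)/\overline{F}(x)\to1$ as $x\to\infty$ for every $y\in\mathbb{R}$. For $F\in\mathcal{L}$, $\mathcal{H}_F$ is the set of eventually positive functions $h$ such that (i) $h(x)/x\to0$; (ii) $\overline{F}(x+yh(x))/\overline{F}(x)\to1$ as $x\to\infty$ for every $y\in\mathbb{R}$; (iii) $h$ is weakly self-neglecting, i.e. $\limsup_{x\to\infty}h(x+yh(x))/h(x)<\infty$ for every $y\in\mathbb{R}$. $\mathcal{H}^\ast_F=\{h\in\mathcal{H}_F: h(x)\to\infty\}$. *)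

(* Defs.v *)
From Stdlib Require Import Reals.
From Coquelicot Require Import Coquelicot.
Open Scope R_scope.

Definition is_distribution_function (F : R -> R) : Prop :=
  (forall x y, x <= y -> F x <= F y) /\
  (forall x, filterlim F (at_right x) (locally (F x))) /\
  filterlim F (Rbar_locally m_infty) (locally 0) /\
  filterlim F (Rbar_locally p_infty) (locally 1).

Definition Fbar (F : R -> R) (x : R) : R := 1 - F x.

Definition upper_endpoint (F : R -> R) : Rbar := Lub_Rbar (fun x => F x < 1).

Definition to_endpoint (a : Rbar) : (R -> Prop) -> Prop :=
  match a with
  | Finite r => at_left r
  | p_infty => Rbar_locally p_infty
  | m_infty => Rbar_locally m_infty
  end.

Definition GMDA (F h : R -> R) : Prop :=
  forall y : R,
    filterlim (fun x => Fbar F (x + y * h x) / Fbar F x)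
      (to_endpoint (upper_endpoint F)) (locally (exp (- y))).

Definition long_tailed (F : R -> R) : Prop :=
  (forall x, 0 <= x -> 0 < Fbar F x) /\
  (forall y : R,
    filterlim (fun x => Fbar F (x + y) / Fbar F x)
      (Rbar_locally p_infty) (locally 1)).

(* The class H_F. Condition (iii), limsup < oo, is written as
   "eventually bounded above". *)
Definition H_class (F : R -> R) (g : R -> R) : Prop :=
  Rbar_locally p_infty (fun x => 0 < g x) /\
  filterlim (fun x => g x / x) (Rbar_locally p_infty) (locally 0) /\
  (forall y : R,
    filterlim (fun x => Fbar F (x + y * g x) / Fbar F x)
      (Rbar_locally p_infty) (locally 1)) /\
  (forall y : R, exists M : R,
    Rbar_locally p_infty (fun x => g (x + y * g x) / g x <= M)).

Definition H_star_class (F : R -> R) (g : R -> R) : Prop :=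
  H_class F g /\ filterlim g (Rbar_locally p_infty) (Rbar_locally p_infty).

(* Main.v *)
Require Import Defs.
From Stdlib Require Import Reals Lra Classical.
From Coquelicot Require Import Coquelicot.
Open Scope R_scope.

Lemma lim_loc (f : R -> R) l :
  filterlim f (Rbar_locally p_infty) (locally l) <->
  forall eps, 0 < eps -> exists M, forall x, M < x -> Rabs (f x - l) < eps.
Proof.
  rewrite filterlim_locally; split.
  - intros H eps Heps. destruct (H (mkposreal eps Heps)) as [M HM].
    exists M; intros x Hx. apply (HM x Hx).
  - intros H eps. destruct (H eps (cond_pos eps)) as [M HM].
    exists M; intros x Hx. apply (HM x Hx).
Qed.

Lemma lim_inf (f : R -> R) (F : (R -> Prop) -> Prop) {FF : Filter F} :
  filterlim f F (Rbar_locally p_infty) <-> forall K, F (fun x => K < f x).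
Proof.
  split.
  - intros H K. apply (H (fun y => K < y)). exists K; auto.
  - intros H P [K HK]. eapply filter_imp; [|apply (H K)]. intros x Hx; auto.
Qed.

Lemma dist_basic F : is_distribution_function F ->
  (forall x y, x <= y -> Fbar F y <= Fbar F x) /\ (forall x, 0 <= Fbar F x <= 1)
  /\ (forall e, 0 < e -> exists M, forall x, M < x -> Fbar F x < e)
  /\ (forall e, 0 < e -> exists M, forall x, x < M -> 1 - e < Fbar F x).
Proof.
  intros [Hmon [_ [Hm Hp]]].
  rewrite filterlim_locally in Hm. rewrite filterlim_locally in Hp.
  assert (Hm' : forall e, 0 < e -> exists M, forall x, x < M -> Rabs (F x - 0) < e).
  { intros e He. destruct (Hm (mkposreal e He)) as [M HM]. exists M. intros x Hx. apply (HM x Hx). }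
  assert (Hp' : forall e, 0 < e -> exists M, forall x, M < x -> Rabs (F x - 1) < e).
  { intros e He. destruct (Hp (mkposreal e He)) as [M HM]. exists M. intros x Hx. apply (HM x Hx). }
  unfold Fbar. repeat split.
  - intros x y Hxy. specialize (Hmon x y Hxy). lra.
  - destruct (Rle_dec (F x) 1) as [?|Hn]; [lra|].
    destruct (Hp' (F x - 1)) as [M HM]; [lra|].
    set (z := Rmax (M+1) x). assert (M < z) by (unfold z; generalize (Rmax_l (M+1) x); lra).
    assert (x <= z) by apply Rmax_r. specialize (HM z H). specialize (Hmon x z H0).
    apply Rabs_def2 in HM. lra.
  - destruct (Rle_dec 0 (F x)) as [?|Hn]; [lra|].
    destruct (Hm' (- F x)) as [M HM]; [lra|].
    set (z := Rmin (M-1) x). assert (z < M) by (unfold z; generalize (Rmin_l (M-1) x); lra).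
    assert (z <= x) by apply Rmin_r. specialize (HM z H). specialize (Hmon z x H0).
    apply Rabs_def2 in HM. lra.
  - intros e He. destruct (Hp' e He) as [M HM]. exists M. intros x Hx.
    specialize (HM x Hx). apply Rabs_def2 in HM. lra.
  - intros e He. destruct (Hm' e He) as [M HM]. exists M. intros x Hx.
    specialize (HM x Hx). apply Rabs_def2 in HM. lra.
Qed.

Lemma endpoint_pinf F : is_distribution_function F -> upper_endpoint F = p_infty -> forall x, F x < 1.
Proof.
  intros [Hmon _] HE x. destruct (Rlt_dec (F x) 1) as [?|Hn]; auto. exfalso.
  destruct (Lub_Rbar_correct (fun x => F x < 1)) as [_ Hl].
  specialize (Hl (Finite x)). unfold upper_endpoint in HE. rewrite HE in Hl.
  simpl in Hl. apply Hl. intros z Hz. simpl.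
  destruct (Rle_dec z x); auto. specialize (Hmon x z ltac:(lra)). lra.
Qed.

Lemma endpoint_of_lt F : (forall x, 0 <= x -> F x < 1) -> upper_endpoint F = p_infty.
Proof.
  intros H. destruct (Lub_Rbar_correct (fun x => F x < 1)) as [Hu _].
  unfold upper_endpoint. destruct (Lub_Rbar (fun x => F x < 1)) as [r| |] eqn:E; auto.
  - exfalso. set (z := Rmax 0 (r+1)). 
    assert (0 <= z) by apply Rmax_l. assert (r + 1 <= z) by apply Rmax_r.
    specialize (Hu z (H z H0)). simpl in Hu. lra.
  - exfalso. specialize (Hu 0 (H 0 (Rle_refl 0))). simpl in Hu. auto.
Qed.

Lemma endpoint_not_minf F : is_distribution_function F -> upper_endpoint F <> m_infty.
Proof.
  intros HF HE. destruct (dist_basic F HF) as [_ [_ [_ Hm]]].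
  destruct (Hm (1/2)) as [M HM]; [lra|].
  destruct (Lub_Rbar_correct (fun x => F x < 1)) as [Hu _].
  specialize (HM (M-1) ltac:(lra)). unfold Fbar in HM.
  specialize (Hu (M-1) ltac:(lra)). unfold upper_endpoint in HE. rewrite HE in Hu. simpl in Hu. auto.
Qed.

Lemma endpoint_fin F r : upper_endpoint F = Finite r -> forall w, r < w -> 1 <= F w.
Proof.
  intros HE w Hw. destruct (Rle_dec 1 (F w)); auto. exfalso.
  destruct (Lub_Rbar_correct (fun x => F x < 1)) as [Hu _].
  specialize (Hu w ltac:(lra)). unfold upper_endpoint in HE. rewrite HE in Hu. simpl in Hu. lra.
Qed.

Lemma endpoint_of_GMDA F h : is_distribution_function F -> GMDA F h ->
  filterlim h (to_endpoint (upper_endpoint F)) (Rbar_locally p_infty) ->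
  upper_endpoint F = p_infty.
Proof.
  intros HF HG Hh. assert (Hnm := endpoint_not_minf F HF).
  destruct (upper_endpoint F) as [r| |] eqn:E; [|reflexivity|exfalso; now apply Hnm].
  exfalso.
  destruct (dist_basic F HF) as [_ [Hb _]].
  specialize (HG 1). rewrite E in HG. simpl in HG. rewrite filterlim_locally in HG.
  assert (He : 0 < exp (-(1)) / 2) by (generalize (exp_pos (-(1))); lra).
  destruct (HG (mkposreal _ He)) as [d1 Hd1].
  simpl in Hh. rewrite lim_inf in Hh. destruct (Hh 1) as [d2 Hd2].
  set (d := Rmin (Rmin (pos d1) (pos d2)) 1).
  assert (dpos : 0 < d) by (unfold d; repeat apply Rmin_pos; try apply cond_pos; lra).
  assert (dle1 : d <= Rmin (pos d1) (pos d2)) by apply Rmin_l.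
  assert (dle2 : d <= 1) by apply Rmin_r.
  assert (d1le : Rmin (pos d1) (pos d2) <= d1) by apply Rmin_l.
  assert (d2le : Rmin (pos d1) (pos d2) <= d2) by apply Rmin_r.
  set (x := r - d / 2).
  assert (Hbx : forall e : posreal, d <= e -> ball r e x).
  { intros e Hde. unfold x. change (Rabs ((r - d/2) - r) < e). rewrite Rabs_left; lra. }
  assert (xlt : x < r) by (unfold x; lra).
  specialize (Hd1 x (Hbx d1 ltac:(lra)) xlt). specialize (Hd2 x (Hbx d2 ltac:(lra)) xlt).
  simpl in Hd1, Hd2.
  assert (HF0 : Fbar F (x + 1 * h x) = 0).
  { assert (H1 := endpoint_fin F r E (x + 1 * h x) ltac:(unfold x in *; lra)).
    specialize (Hb (x + 1 * h x)). unfold Fbar in *. lra. }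
  rewrite HF0 in Hd1. unfold Rdiv in Hd1. rewrite Rmult_0_l in Hd1.
  change (Rabs (0 - exp (-(1))) < exp (-(1)) / 2) in Hd1.
  rewrite Rabs_left in Hd1; generalize (exp_pos (-(1))); lra.
apply within_filter, locally_filter.
Qed.

Definition GMDAi F h := forall y eps, 0 < eps -> exists M, forall x, M < x ->
  Rabs (Fbar F (x + y * h x) / Fbar F x - exp (- y)) < eps.

Lemma GMDA_i F h : GMDA F h -> upper_endpoint F = p_infty -> GMDAi F h.
Proof.
  intros HG E y. specialize (HG y). rewrite E in HG. simpl in HG. rewrite lim_loc in HG. exact HG.
Qed.

Lemma exp_bnd d : 0 <= d <= 1/2 -> 1 - d <= exp (- d) /\ exp d <= 1 + 2 * d.
Proof.
  intros Hd. assert (H1 : 1 - d <= exp (- d)) by (generalize (exp_ineq1_le (- d)); lra).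
  split; auto.
  assert (H2 : exp d * exp (- d) = 1) by (rewrite <- exp_plus; replace (d + - d) with 0 by ring; apply exp_0).
  assert (0 < exp d) by apply exp_pos.
  assert (exp d * (1 - d) <= 1) by (rewrite <- H2; apply Rmult_le_compat_l; lra).
  nra.
Qed.

Lemma Rmax3 a b c x : Rmax a (Rmax b c) < x -> a < x /\ b < x /\ c < x.
Proof.
  intros H. generalize (Rmax_l a (Rmax b c)) (Rmax_r a (Rmax b c)) (Rmax_l b c) (Rmax_r b c). lra.
Qed.

Lemma shift_small F h u : is_distribution_function F -> (forall x, 0 < Fbar F x) ->
  GMDAi F h ->
  (forall d, 0 < d -> exists M, forall x, M < x -> Rabs (u x) <= d * h x) ->
  forall eps, 0 < eps -> exists M, forall x, M < x ->
    Rabs (Fbar F (x + u x) / Fbar F x - 1) < eps.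
Proof.
  intros HF Hpos HG Hu eps Heps.
  destruct (dist_basic F HF) as [Hmon _].
  set (d := Rmin (eps / 8) (1/2)).
  assert (H : 0 < d) by (unfold d; apply Rmin_pos; lra).
  assert (Hd8 : d <= eps / 8) by apply Rmin_l. assert (Hd2 : d <= 1/2) by apply Rmin_r.
  destruct (exp_bnd d ltac:(lra)) as [Eb1 Eb2].
  destruct (HG d (eps/2) ltac:(lra)) as [M1 H1].
  destruct (HG (-d) (eps/2) ltac:(lra)) as [M2 H2].
  destruct (Hu d H) as [M3 H3].
  exists (Rmax M1 (Rmax M2 M3)). intros x Hx. apply Rmax3 in Hx. destruct Hx as [Hx1 [Hx2 Hx3]].
  specialize (H1 x Hx1). specialize (H2 x Hx2). specialize (H3 x Hx3).
  rewrite Ropp_involutive in H2.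
  apply Rabs_def2 in H1. apply Rabs_def2 in H2.
  assert (Hle1 : Fbar F (x + d * h x) <= Fbar F (x + u x)).
  { apply Hmon. generalize (Rle_abs (u x)). lra. }
  assert (Hle2 : Fbar F (x + u x) <= Fbar F (x + - d * h x)).
  { apply Hmon. generalize (Rle_abs (- u x)). rewrite Rabs_Ropp. lra. }
  assert (tpos : 0 < / Fbar F x) by (apply Rinv_0_lt_compat; auto).
  unfold Rdiv in *.
  apply Rmult_le_compat_r with (r := / Fbar F x) in Hle1; [|lra].
  apply Rmult_le_compat_r with (r := / Fbar F x) in Hle2; [|lra].
  apply Rabs_def1; lra.
Qed.

Lemma Fpos_of F : is_distribution_function F -> upper_endpoint F = p_infty -> forall x, 0 < Fbar F x.
Proof. intros HF E x. generalize (endpoint_pinf F HF E x). unfold Fbar. lra. Qed.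

Lemma const_small h (y : R) : (forall K, exists M, forall x, M < x -> K < h x) ->
  forall d, 0 < d -> exists M, forall x, M < x -> Rabs y <= d * h x.
Proof.
  intros Hh d Hd. destruct (Hh (Rabs y / d)) as [M HM]. exists M. intros x Hx.
  specialize (HM x Hx). apply Rmult_lt_compat_l with (r := d) in HM; auto.
  unfold Rdiv in HM. rewrite <- Rmult_assoc, (Rmult_comm d), Rmult_assoc, Rinv_r, Rmult_1_r in HM; lra.
Qed.

Lemma LT_of F h : is_distribution_function F -> upper_endpoint F = p_infty ->
  GMDAi F h -> (forall K, exists M, forall x, M < x -> K < h x) -> long_tailed F.
Proof.
  intros HF E HG Hh. split.
  - intros x _. apply Fpos_of; auto.
  - intros y. rewrite lim_loc. apply (shift_small F h (fun _ => y)); auto.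
    + apply Fpos_of; auto.
    + apply const_small; auto.
Qed.

Lemma hinf_of_LT F h : is_distribution_function F -> GMDAi F h -> long_tailed F ->
  forall K, exists M, forall x, M < x -> K < h x.
Proof.
  intros HF HG [Hpos HL] K.
  destruct (dist_basic F HF) as [Hmon _].
  assert (E1 : 2 < exp 1) by (generalize (exp_ineq1 1 ltac:(lra)); lra).
  assert (E2 : exp (- (1)) < 1/2).
  { rewrite exp_Ropp. apply Rinv_lt_contravar in E1; [|generalize (exp_pos 1); nra]. lra. }
  destruct (HG 1 (1/4) ltac:(lra)) as [M1 H1].
  specialize (HL K). rewrite lim_loc in HL. destruct (HL (1/4) ltac:(lra)) as [M2 H2].
  exists (Rmax 0 (Rmax M1 M2)). intros x Hx. apply Rmax3 in Hx. destruct Hx as [Hx0 [Hx1 Hx2]].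
  specialize (H1 x Hx1). specialize (H2 x Hx2). apply Rabs_def2 in H1. apply Rabs_def2 in H2.
  destruct (Rlt_dec K (h x)) as [?|Hn]; auto. exfalso.
  assert (Hle : Fbar F (x + K) <= Fbar F (x + 1 * h x)) by (apply Hmon; lra).
  assert (tpos : 0 < / Fbar F x) by (apply Rinv_0_lt_compat; apply Hpos; lra).
  unfold Rdiv in *.
  apply Rmult_le_compat_r with (r := / Fbar F x) in Hle; lra.
Qed.

Lemma Rpow_small p : 0 < p < 1 -> forall d, 0 < d -> exists K, 0 < K /\
  forall a, K < a -> Rpower a p < d * a.
Proof.
  intros Hp d Hd. exists (exp (ln d / (p - 1))). split; [apply exp_pos|].
  intros a Ha. assert (apos : 0 < a) by (generalize (exp_pos (ln d / (p - 1))); lra).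
  apply ln_increasing in Ha; [|apply exp_pos]. rewrite ln_exp in Ha.
  assert (H1 : (p - 1) * ln a < ln d).
  { apply Rmult_lt_compat_l with (r := 1 - p) in Ha; [|lra].
    replace ((1 - p) * (ln d / (p - 1))) with (- ln d) in Ha by (field; lra). lra. }
  unfold Rpower. replace (p * ln a) with ((p - 1) * ln a + ln a) by ring.
  rewrite exp_plus, exp_ln; auto.
  apply Rmult_lt_compat_r; auto. rewrite <- (exp_ln d Hd). apply exp_increasing; auto.
Qed.

Lemma h_lt_x F h : is_distribution_function F -> (forall x, 0 < Fbar F x) -> GMDAi F h ->
  exists M, forall x, M < x -> h x < x.
Proof.
  intros HF Hpos HG. destruct (dist_basic F HF) as [Hmon [_ [Hp Hm]]].
  set (E := exp 2). assert (Ep : 0 < E) by apply exp_pos.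
  destruct (HG (-2) 1 ltac:(lra)) as [M1 H1].
  destruct (Hp (/ (2 * (E + 1)))) as [M2 H2]. { apply Rinv_0_lt_compat; lra. }
  destruct (Hm (1/2) ltac:(lra)) as [M3 H3].
  exists (Rmax 0 (Rmax M1 (Rmax M2 (- M3)))). intros x Hx.
  apply Rmax3 in Hx. destruct Hx as [Hx0 [Hx1 Hx2]]. assert (Hx3 : - M3 < x) by (generalize (Rmax_r M2 (- M3)); lra). assert (Hx2' : M2 < x) by (generalize (Rmax_l M2 (- M3)); lra). clear Hx2. rename Hx2' into Hx2.
  specialize (H1 x Hx1). specialize (H2 x Hx2). specialize (H3 (- x) ltac:(lra)).
  replace (- -2) with 2 in H1 by ring. fold E in H1. apply Rabs_def2 in H1.
  destruct (Rlt_dec (h x) x) as [?|Hn]; auto. exfalso.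
  assert (Hle : Fbar F (- x) <= Fbar F (x + -2 * h x)) by (apply Hmon; lra).
  set (r := Fbar F (x + -2 * h x) / Fbar F x) in *.
  assert (Hr : r * Fbar F x = Fbar F (x + -2 * h x)) by (unfold r; field; apply Rgt_not_eq, Hpos).
  assert (HFx : Fbar F x * (2 * (E + 1)) < 1).
  { apply Rmult_lt_compat_r with (r := 2 * (E + 1)) in H2; [|lra].
    rewrite Rinv_l in H2; lra. }
  assert (0 < Fbar F x) by auto.
  assert (r * Fbar F x <= (E + 1) * Fbar F x) by (apply Rmult_le_compat_r; lra).
  lra.
Qed.

Lemma Rpower_lt_base a b p : 0 < p -> 0 < a -> a < b -> Rpower a p < Rpower b p.
Proof.
  intros Hp Ha Hab. unfold Rpower. apply exp_increasing.
  apply Rmult_lt_compat_l; auto. apply ln_increasing; auto.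
Qed.

Lemma g_small h p : (forall x, 0 < h x) -> 0 < p < 1 ->
  (forall K, exists M, forall x, M < x -> K < h x) ->
  forall c, 0 < c -> exists M, forall x, M < x -> Rpower (h x) p < c * h x.
Proof.
  intros hpos Hp Hh c Hc. destruct (Rpow_small p Hp c Hc) as [K [_ HK]].
  destruct (Hh K) as [M HM]. exists M. intros x Hx. apply HK, HM, Hx.
Qed.

Lemma shift_g F h p : is_distribution_function F -> (forall x, 0 < Fbar F x) -> GMDAi F h ->
  (forall x, 0 < h x) -> 0 < p < 1 ->
  (forall K, exists M, forall x, M < x -> K < h x) ->
  forall y eps, 0 < eps -> exists M, forall x, M < x ->
    Rabs (Fbar F (x + y * Rpower (h x) p) / Fbar F x - 1) < eps.
Proof.
  intros HF Hpos HG hpos Hp Hh y.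
  apply (shift_small F h (fun x => y * Rpower (h x) p)); auto.
  intros d Hd. destruct (g_small h p hpos Hp Hh (d / (Rabs y + 1))) as [M HM].
  { apply Rdiv_lt_0_compat; auto. generalize (Rabs_pos y); lra. }
  exists M. intros x Hx. specialize (HM x Hx).
  rewrite Rabs_mult. assert (gp : 0 < Rpower (h x) p) by (unfold Rpower; apply exp_pos).
  rewrite (Rabs_right (Rpower (h x) p)) by lra.
  assert (ya : 0 <= Rabs y) by apply Rabs_pos.
  apply Rmult_lt_compat_l with (r := Rabs y + 1) in HM; [|lra].
  replace ((Rabs y + 1) * (d / (Rabs y + 1) * h x)) with (d * h x) in HM by (field; lra).
  nra.
Qed.

Lemma ev (P : R -> Prop) : (exists M, forall x, M < x -> P x) -> Rbar_locally p_infty P.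
Proof. auto. Qed.

Lemma bounded_g F h p : is_distribution_function F -> (forall x, 0 < Fbar F x) -> GMDAi F h ->
  (forall x, 0 < h x) -> 0 < p < 1 ->
  (forall K, exists M, forall x, M < x -> K < h x) ->
  (exists M, forall x, M < x -> h x < x) ->
  forall y, exists M, Rbar_locally p_infty
    (fun x => Rpower (h (x + y * Rpower (h x) p)) p / Rpower (h x) p <= M).
Proof.
  intros HF Hpos HG hpos Hp Hh Hlt y. exists 5.
  destruct (dist_basic F HF) as [Hmon _].
  set (eps := 1/40).
  assert (ya : 0 <= Rabs y) by apply Rabs_pos.
  assert (gp : forall x, 0 < Rpower (h x) p) by (intros; unfold Rpower; apply exp_pos).
  assert (E1 : Rbar_locally p_infty (fun x => Rabs y * Rpower (h x) p <= h x)).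
  { destruct (g_small h p hpos Hp Hh (/ (Rabs y + 1))) as [M HM].
    { apply Rinv_0_lt_compat; lra. }
    exists M. intros x Hx. specialize (HM x Hx). specialize (gp x). specialize (hpos x).
    apply Rmult_lt_compat_l with (r := Rabs y + 1) in HM; [|lra].
    rewrite <- Rmult_assoc, Rinv_r, Rmult_1_l in HM; nra. }
  assert (E2 : Rbar_locally p_infty (fun x => 0 < x /\ Rabs y * Rpower (h x) p <= x / 2)).
  { destruct (Rpow_small p Hp (/ (2 * (Rabs y + 1)))) as [K [Kp HK]].
    { apply Rinv_0_lt_compat; lra. }
    destruct Hlt as [Mb HMb].
    exists (Rmax K Mb). intros x Hx.
    assert (K < x) by (generalize (Rmax_l K Mb); lra).
    assert (Mb < x) by (generalize (Rmax_r K Mb); lra).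
    specialize (HK x H). specialize (HMb x H0).
    assert (Hg : Rpower (h x) p < Rpower x p) by (apply Rpower_lt_base; auto; lra).
    split; [lra|].
    assert (Rpower (h x) p * (2 * (Rabs y + 1)) < x).
    { apply Rmult_lt_compat_r with (r := 2 * (Rabs y + 1)) in HK; [|lra].
      rewrite (Rmult_comm (/ _) x), Rmult_assoc, Rinv_l, Rmult_1_r in HK; [|lra].
      apply Rmult_lt_compat_r with (r := 2 * (Rabs y + 1)) in Hg; lra. }
    specialize (gp x). nra. }
  assert (E3 : Rbar_locally p_infty (fun x =>
     Rabs (Fbar F (x + 4 * h x) / Fbar F x - exp (- (4))) < eps)).
  { apply ev. apply HG. unfold eps; lra. }
  assert (E4 : Rbar_locally p_infty (fun x =>
     Rabs (Fbar F (x + y * Rpower (h x) p) / Fbar F x - 1) < eps)).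
  { apply ev. apply (shift_g F h p); auto. unfold eps; lra. }
  destruct (HG 1 eps ltac:(unfold eps; lra)) as [M1 H5].
  assert (E5 : Rbar_locally p_infty (fun x => 2 * M1 < x)) by (exists (2 * M1); auto).
  generalize (filter_and _ _ E1 (filter_and _ _ E2 (filter_and _ _ E3 (filter_and _ _ E4 E5)))).
  apply filter_imp. intros x [F1 [[xp F2] [F3 [F4 F5]]]].
  set (z := x + y * Rpower (h x) p) in *.
  assert (Hyg : - (Rabs y * Rpower (h x) p) <= y * Rpower (h x) p).
  { assert (Rabs (y * Rpower (h x) p) = Rabs y * Rpower (h x) p).
    { rewrite Rabs_mult, (Rabs_right (Rpower (h x) p)); auto. generalize (gp x); lra. }
    generalize (Rle_abs (- (y * Rpower (h x) p))). rewrite Rabs_Ropp. lra. }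
  assert (Hz : M1 < z) by (unfold z; lra).
  specialize (H5 z Hz).
  assert (Hhz : h z < 5 * h x).
  { destruct (Rlt_dec (h z) (5 * h x)) as [?|Hn]; auto. exfalso.
    assert (Hle : Fbar F (z + 1 * h z) <= Fbar F (x + 4 * h x)) by (apply Hmon; unfold z in *; lra).
    assert (A1 : 1/3 <= exp (- (1))).
    { rewrite exp_Ropp. generalize exp_le_3 (exp_pos 1). intros. 
      apply Rinv_le_contravar in H; [|auto]. lra. }
    assert (A4 : exp (- (4)) < 1/5).
    { rewrite exp_Ropp. generalize (exp_ineq1 4 ltac:(lra)) (exp_pos 4). intros.
      apply Rinv_lt_contravar in H; [|nra]. lra. }
    apply Rabs_def2 in H5. apply Rabs_def2 in F3. apply Rabs_def2 in F4.
    assert (a0 : 0 < Fbar F x) by auto. assert (b0 : 0 < Fbar F z) by auto.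
    set (a := Fbar F x) in *. set (b := Fbar F z) in *.
    set (c := Fbar F (z + 1 * h z)) in *. set (e := Fbar F (x + 4 * h x)) in *.
    assert (Hc : (exp (- (1)) - eps) * b < c).
    { assert (Hq : c / b * b = c) by (field; lra).
      assert (Hl : exp (- (1)) - eps < c / b) by lra.
      apply Rmult_lt_compat_r with (r := b) in Hl; lra. }
    assert (He : e < (exp (- (4)) + eps) * a).
    { assert (Hq : e / a * a = e) by (field; lra).
      assert (Hl : e / a < exp (- (4)) + eps) by lra.
      apply Rmult_lt_compat_r with (r := a) in Hl; lra. }
    assert (Hb : (1 - eps) * a < b).
    { assert (Hq : b / a * a = b) by (field; lra).
      assert (Hl : 1 - eps < b / a) by lra.
      apply Rmult_lt_compat_r with (r := a) in Hl; lra. }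
    assert (Hb2 : (exp (- (1)) - eps) * ((1 - eps) * a) < (exp (- (1)) - eps) * b).
    { apply Rmult_lt_compat_l; auto. unfold eps in *; lra. }
    assert (Hb3 : (1/3 - eps) * ((1 - eps) * a) <= (exp (- (1)) - eps) * ((1 - eps) * a)).
    { apply Rmult_le_compat_r; unfold eps in *; nra. }
    assert (Hb4 : (exp (- (4)) + eps) * a <= (1/5 + eps) * a).
    { apply Rmult_le_compat_r; lra. }
    unfold eps in *. nra. }
  unfold Rpower, Rdiv. rewrite <- exp_Ropp, <- exp_plus.
  assert (hzp := hpos z). assert (hxp := hpos x).
  assert (L : ln (h z) < ln 5 + ln (h x)).
  { rewrite <- ln_mult by lra. apply ln_increasing; lra. }
  assert (l5 : 0 < ln 5) by (rewrite <- ln_1; apply ln_increasing; lra).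
  rewrite <- (exp_ln 5) by lra. left. apply exp_increasing. nra.
Qed.

Lemma Hstar F h p : is_distribution_function F -> (forall x, 0 < Fbar F x) -> GMDAi F h ->
  (forall x, 0 < h x) -> 0 < p < 1 ->
  (forall K, exists M, forall x, M < x -> K < h x) ->
  H_star_class F (fun x => Rpower (h x) p).
Proof.
  intros HF Hpos HG hpos Hp Hh.
  assert (gp : forall x, 0 < Rpower (h x) p) by (intros; unfold Rpower; apply exp_pos).
  unfold H_star_class, H_class. split; [split; [|split; [|split]]|].
  - exists 0. intros; auto.
  - rewrite lim_loc. intros eps Heps.
    destruct (Rpow_small p Hp eps Heps) as [K [Kp HK]].
    destruct (h_lt_x F h HF Hpos HG) as [Mb HMb].
    exists (Rmax K Mb). intros x Hx.
    assert (K < x) by (generalize (Rmax_l K Mb); lra).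
    assert (Mb < x) by (generalize (Rmax_r K Mb); lra).
    specialize (HK x H). specialize (HMb x H0).
    assert (Hg : Rpower (h x) p < Rpower x p) by (apply Rpower_lt_base; auto; lra).
    assert (Hq : Rpower (h x) p / x * x = Rpower (h x) p) by (field; lra).
    specialize (gp x).
    assert (0 < Rpower (h x) p / x) by (apply Rdiv_lt_0_compat; lra).
    assert (Rpower (h x) p / x < eps) by nra.
    rewrite Rabs_right; lra.
  - intros y. rewrite lim_loc. apply shift_g; auto.
  - apply (bounded_g F h p); auto. apply (h_lt_x F h); auto.
  - rewrite (@lim_inf _ _ (@filter_filter _ _ (Rbar_locally_filter p_infty))). intros K. set (K' := Rmax K 1).
    assert (K <= K') by apply Rmax_l. assert (1 <= K') by apply Rmax_r.
    destruct (Hh (exp (ln K' / p))) as [M HM]. exists M. intros x Hx.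
    specialize (HM x Hx). apply ln_increasing in HM; [|apply exp_pos]. rewrite ln_exp in HM.
    assert (ln K' < p * ln (h x)).
    { apply Rmult_lt_compat_l with (r := p) in HM; [|lra].
      replace (p * (ln K' / p)) with (ln K') in HM by (field; lra). lra. }
    unfold Rpower. apply exp_increasing in H1. rewrite exp_ln in H1; lra.
Qed.

Theorem lemma2p1 (F h : R -> R)
  (HF : is_distribution_function F)
  (hpos : forall x, 0 < h x) :
  ((GMDA F h /\
    filterlim h (to_endpoint (upper_endpoint F)) (Rbar_locally p_infty))
   <-> (GMDA F h /\ long_tailed F))
  /\
  ((GMDA F h /\ long_tailed F) ->
   forall p : R, 0 < p < 1 ->
     H_star_class F (fun x => Rpower (h x) p)).
Proof.
  assert (EL : long_tailed F -> upper_endpoint F = p_infty).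
  { intros [HL _]. apply endpoint_of_lt. intros x Hx. specialize (HL x Hx). unfold Fbar in HL. lra. }
  split; [split|].
  - intros [HG Hh]. assert (E := endpoint_of_GMDA F h HF HG Hh). split; auto.
    apply (LT_of F h); auto. apply GMDA_i; auto.
    rewrite E in Hh. simpl in Hh. rewrite (@lim_inf _ _ (@filter_filter _ _ (Rbar_locally_filter p_infty))) in Hh. exact Hh.
  - intros [HG HL]. assert (E := EL HL). split; auto. rewrite E. simpl.
    rewrite (@lim_inf _ _ (@filter_filter _ _ (Rbar_locally_filter p_infty))). apply (hinf_of_LT F h); auto. apply GMDA_i; auto.
  - intros [HG HL] p Hp. assert (E := EL HL).
    apply Hstar; auto.
    + apply Fpos_of; auto.
    + apply GMDA_i; auto.
    + apply (hinf_of_LT F h); auto. apply GMDA_i; auto.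
Qed.
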